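(* Let $K$ be a commutative ring of characteristic $0$ with unit and $M$ a multiplicative $\mathbb{R}$-vector subspace of $\mathcal{H}^{>0}$. Let $F$ be an $M$-generalized power series over $K$ with generating monomials $m_0<\dots<m_k$. Let $l\in\mathbb{N}$ and assume that $\{m_0,\dots,m_k\}$ has $l+1$ distinct comparability classes. Then $\operatorname{supp}(F)$ has reverse-order type at most $\omega^{l+1}$ (that is, $\operatorname{supp}(F)$ ordered by $>$ is a well-order of order type at most $\omega^{l+1}$).
   Context: $\mathcal{H}$ is the Hardy field of germs at $+\infty$ of unary functions definable in $\mathbb{R}_{\mathrm{an},\exp}$, totally ordered by eventual comparison. Germs $f,g$ are comparable if there are $r,s>0$ with $|f|^r<|g|<|f|^s$ eventually; this is an equivalence relation, whose classes are the comparability classes. An $M$-generalized power series over $K$ with generating monomials $m_0,\dots,m_k$ is a series $G(m_0,\dots,m_k)=\sum_{n\in M}\big(\sum_{\alpha\in\operatorname{supp}G,\,m^\alpha=n}a_\alpha\big)n$ in the ring $K((M))$ of formal series with anti-well-ordered support, where $m_0,\dots,m_k\in M$ are small (tend to $0$) and $G=\sum_\alpha a_\alpha X^\alpha$ is a generalized power series over $K$ in $X_0,\dots,X_k$ (support in a product of well-ordered subsets of $[0,\infty)$) with natural support (for each $a>0$ and each $i$, $[0,a)\cap\Pi_i(\operatorname{supp}G)$ is finite). *)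

(* Defs.v *)
From Stdlib Require Import Reals List.
From mathcomp Require Import all_boot all_algebra.

Set Implicit Arguments.
Unset Strict Implicit.
Unset Printing Implicit Defensive.

Local Open Scope R_scope.

(* Restricted analytic functions (van den Dries-Macintyre-Marker):     *)
(* a power series in n variables, centred at 0, converging (absolutely) *)
(* on a neighbourhood of [-1,1]^n; the function equals the series on    *)
(* [-1,1]^n and is 0 outside.                                           *)

Fixpoint sumN (N : nat) (h : nat -> R) : R :=
  match N with O => 0 | S N' => sumN N' h + h N' end.

Fixpoint box_sum (n N : nat) (g : list nat -> R) : R :=
  match n with
  | O => g nil
  | S n' => sumN N (fun i => box_sum n' N (fun al => g (i :: al)))
  end.

Fixpoint mono (xs : list R) (al : list nat) : R :=
  match xs, al with
  | x :: xs', a :: al' => x ^ a * mono xs' al'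
  | _, _ => 1
  end.

Definition deg (al : list nat) : nat := List.fold_right Nat.add O al.

Record ranfun := RanFun {
  ra_arity : nat;
  ra_coef : list nat -> R;
  ra_conv : exists r, 1 < r /\ exists B, forall N,
      box_sum ra_arity N (fun al => Rabs (ra_coef al) * r ^ deg al) <= B
}.

Definition ra_graph (f : ranfun) (xs : list R) (y : R) : Prop :=
  let inbox := List.length xs = ra_arity f /\
               List.Forall (fun x => Rabs x <= 1) xs in
  (inbox /\ Un_cv (fun N => box_sum (ra_arity f) N
                              (fun al => ra_coef f al * mono xs al)) y)
  \/ (~ inbox /\ y = 0).

(* First-order formulas of the language of R_an,exp (relational form:  *)
(* <, =, constants (parameters), graphs of +, *, -, exp and of every    *)
(* restricted analytic function), variables indexed by nat.            *)

Inductive formula : Type :=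
| FLt (i j : nat)
| FEq (i j : nat)
| FConst (i : nat) (r : R)
| FAdd (i j k : nat)
| FMul (i j k : nat)
| FNeg (i j : nat)
| FExp (i j : nat)
| FRan (f : ranfun) (i : nat) (js : list nat)
| FNot (p : formula)
| FAnd (p q : formula)
| FOr (p q : formula)
| FEx (i : nat) (p : formula).

Definition upd (e : nat -> R) (i : nat) (r : R) : nat -> R :=
  fun j => if Nat.eqb j i then r else e j.

Fixpoint sat (e : nat -> R) (p : formula) : Prop :=
  match p with
  | FLt i j => e i < e j
  | FEq i j => e i = e j
  | FConst i r => e i = r
  | FAdd i j k => e i = e j + e k
  | FMul i j k => e i = e j * e k
  | FNeg i j => e i = - e j
  | FExp i j => e i = exp (e j)
  | FRan f i js => ra_graph f (List.map e js) (e i)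
  | FNot p => ~ sat e p
  | FAnd p q => sat e p /\ sat e q
  | FOr p q => sat e p \/ sat e q
  | FEx i p => exists r, sat (upd e i r) p
  end.

(* Germs at +oo.  A germ is represented by any function R -> R; all    *)
(* notions below only depend on the values on some tail (a, +oo).      *)

Definition evt (P : R -> Prop) : Prop := exists a, forall x, a < x -> P x.

(* f (restricted to some tail) has a graph definable in R_an,exp with
   parameters: f represents an element of the Hardy field H *)
Definition definable_germ (f : R -> R) : Prop :=
  exists (p : formula) (a : R), forall (e : nat -> R) (x y : R),
    a < x -> (sat (upd (upd e 0 x) 1 y) p <-> y = f x).

(* M is a multiplicative R-vector subspace of H^{>0}: a set of germs
   (closed under eventual equality) of positive definable functions,
   containing 1, closed under products and real powers f |-> f^r *)
Definition mult_vsubspace (M : (R -> R) -> Prop) : Prop :=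
  (forall f, M f -> definable_germ f /\ evt (fun x => 0 < f x)) /\
  (forall f g, M f -> evt (fun x => f x = g x) -> M g) /\
  M (fun _ => 1) /\
  (forall f g, M f -> M g -> M (fun x => f x * g x)) /\
  (forall f r, M f -> M (fun x => Rpower (f x) r)).

Definition small (f : R -> R) : Prop :=
  forall eps, 0 < eps -> evt (fun x => Rabs (f x) < eps).

Definition comparable (f g : R -> R) : Prop :=
  exists r s, 0 < r /\ 0 < s /\
    evt (fun x => Rpower (Rabs (f x)) r < Rabs (g x) /\
                  Rabs (g x) < Rpower (Rabs (f x)) s).

Definition gen_monomials (M : (R -> R) -> Prop) (k : nat)
    (m : nat -> R -> R) : Prop :=
  (forall i, (i <= k)%nat -> M (m i) /\ small (m i)) /\
  (forall i, (i < k)%nat -> evt (fun x => m i x < m (S i) x)).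

Definition num_comp_classes (k : nat) (m : nat -> R -> R) (c : nat) : Prop :=
  exists cl : nat -> nat,
    (forall i, (i <= k)%nat -> (cl i < c)%nat) /\
    (forall j, (j < c)%nat -> exists i, (i <= k)%nat /\ cl i = j) /\
    (forall i j, (i <= k)%nat -> (j <= k)%nat ->
       (comparable (m i) (m j) <-> cl i = cl j)).

Fixpoint mpow (m : nat -> R -> R) (i : nat) (al : list R) (x : R) : R :=
  match al with
  | nil => 1
  | a :: al' => Rpower (m i x) a * mpow m (S i) al' x
  end.

Definition well_ordered_R (W : R -> Prop) : Prop :=
  forall S : R -> Prop, (forall x, S x -> W x) -> (exists x, S x) ->
    exists x, S x /\ forall y, S y -> x <= y.

(* Generalized power series over K in X_0..X_k: G a = coefficient of   *)
(* X^a, exponents a : list R of length k+1.                            *)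

Definition char0 (K : comNzRingType) : Prop :=
  forall n : nat, (GRing.natmul (@GRing.one K) n.+1) <> @GRing.zero K.

Definition gen_power_series (K : comNzRingType) (k : nat) (G : list R -> K)
  : Prop :=
  exists W : nat -> R -> Prop,
    (forall i, (i <= k)%nat ->
        well_ordered_R (W i) /\ forall x, W i x -> 0 <= x) /\
    (forall al, G al <> @GRing.zero K ->
        List.length al = S k /\
        forall i, (i <= k)%nat -> W i (List.nth i al 0)).

Definition natural_support (K : comNzRingType) (k : nat) (G : list R -> K)
  : Prop :=
  forall a, 0 < a -> forall i, (i <= k)%nat ->
    exists L : list R, forall al, G al <> @GRing.zero K ->
      List.nth i al 0 < a -> List.In (List.nth i al 0) L.

Definition ksum (K : comNzRingType) (G : list R -> K) (s : list (list R)) : K :=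
  List.fold_right (fun al acc => GRing.add (G al) acc) (@GRing.zero K) s.

(* n belongs to supp G(m_0,...,m_k): n in M and the (finite) sum of the
   a_alpha over {alpha in supp G | m^alpha = n} is nonzero *)
Definition in_supp (K : comNzRingType) (M : (R -> R) -> Prop)
    (m : nat -> R -> R) (G : list R -> K) (n : R -> R) : Prop :=
  M n /\
  exists s : list (list R),
    List.NoDup s /\
    (forall al, List.In al s <->
       (G al <> @GRing.zero K /\ evt (fun x => mpow m 0 al x = n x))) /\
    ksum G s <> @GRing.zero K.

(* strict lexicographic order on nat-tuples (first entry most
   significant); (N^(l+1), lexlt) has order type omega^(l+1) *)
Fixpoint lexlt (s t : list nat) : Prop :=
  match s, t with
  | a :: s', b :: t' => (a < b)%nat \/ (a = b /\ lexlt s' t')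
  | _, _ => False
  end.

(* Main.v *)
Require Import Defs.
From Stdlib Require Import Reals List.
From mathcomp Require Import all_boot all_algebra.
From mathcomp Require classical_sets boolp filter.
From Stdlib Require Import Lia Lra ZArith.
From mathcomp Require Import zify.
From Stdlib Require Import ClassicalEpsilon.
Delimit Scope nat_scope with N.

Set Implicit Arguments.
Unset Strict Implicit.

Section UltraSec.

Lemma ultra_exists (T : Type) (F : (T -> Prop) -> Prop) :
  F (fun _ => True) ->
  (forall A B, F A -> F B -> F (fun x => A x /\ B x)) ->
  (forall A B : T -> Prop, (forall x, A x -> B x) -> F A -> F B) ->
  (forall A, F A -> exists x, A x) ->
  exists U : (T -> Prop) -> Prop,
    (forall A B, U A -> U B -> U (fun x => A x /\ B x)) /\
    (forall A B : T -> Prop, (forall x, A x -> B x) -> U A -> U B) /\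
    (forall A, U A -> exists x, A x) /\
    (forall A, U A \/ U (fun x => ~ A x)) /\
    (forall A, F A -> U A).
Proof.
move=> FT FI FS Fex.
have FF : filter.Filter (F : classical_sets.set_system T).
  split.
  - exact: FT.
  - move=> A B HA HB; exact: FI.
  - move=> A B AB; exact: FS.
have PF : filter.ProperFilter (F : classical_sets.set_system T) by apply: filter.Build_ProperFilter_ex.
have [U [UU FU]] := filter.ultraFilterLemma PF.
exists U; split; [|split; [|split; [|split]]].
- move=> A B HA HB; exact: (@filter.filterI _ _ (@filter.filter_filter _ _ (@filter.ultra_proper _ _ UU)) A B HA HB).
- move=> A B AB HA; exact: (@filter.filterS _ _ (@filter.filter_filter _ _ (@filter.ultra_proper _ _ UU)) A B AB HA).
- move=> A HA; exact: (@filter.filter_ex _ _ (@filter.ultra_proper _ _ UU) A HA).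
- move=> A; exact: (filter.in_ultra_setVsetC A UU).
- move=> A HA; exact: FU.
Qed.

End UltraSec.



Lemma lexlt_irrefl s : ~ lexlt s s.
Proof. elim: s => [|a s IH] //= [H|[_ H]]; [lia|exact: IH]. Qed.

Lemma lexlt_trans s t u : lexlt s t -> lexlt t u -> lexlt s u.
Proof.
elim: s t u => [|a s IH] [|b t] [|c u] //=.
move=> [H1|[E1 H1]] [H2|[E2 H2]]; subst.
- left; lia.
- left; lia.
- left; lia.
- right; split => //; exact: IH H1 H2.
Qed.

Lemma lex_total s t : length s = length t -> s = t \/ lexlt s t \/ lexlt t s.
Proof.
elim: s t => [|a s IH] [|b t] //=; first by left.
move=> [] /IH [->|[H|H]].
- have [Hab|[Hab|Hab]] : (a < b)%N \/ a = b \/ (b < a)%N by lia.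
  + by right; left; left.
  + by left; subst.
  + by right; right; left.
- have [Hab|[Hab|Hab]] : (a < b)%N \/ a = b \/ (b < a)%N by lia.
  + by right; left; left.
  + by right; left; right.
  + by right; right; left.
- have [Hab|[Hab|Hab]] : (a < b)%N \/ a = b \/ (b < a)%N by lia.
  + by right; left; left.
  + by right; right; right; subst.
  + by right; right; left.
Qed.

Definition lexle s t := lexlt s t \/ s = t.
Lemma lexle_refl s : lexle s s. Proof. by right. Qed.

Lemma nat_min (Q : nat -> Prop) : (exists n, Q n) -> exists n, Q n /\ forall m, Q m -> (n <= m)%N.
Proof.
move=> [n Hn].
suff : forall N n, (n <= N)%N -> Q n -> exists n, Q n /\ forall m, Q m -> (n <= m)%N.
  by move=> /(_ n n (leqnn n) Hn).
elim => [|N IH] n' Hn' Qn.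
- exists n'; split => // m _; lia.
- case: (classic (exists m, Q m /\ (m < n')%N)) => [[m [Qm Hm]]|H].
  + apply: (IH m) => //; lia.
  + exists n'; split => // m Qm; case: (leqP n' m) => // Hmn; exfalso; apply: H; by exists m.
Qed.

Lemma lex_min c (Q : list nat -> Prop) : (forall q, Q q -> length q = c) ->
  (exists q, Q q) -> exists m, Q m /\ forall q, Q q -> ~ lexlt q m.
Proof.
elim: c Q => [|c IH] Q HQ [q Qq].
- exists q; split => // q' Qq'; have := HQ _ Qq; have := HQ _ Qq'.
  case: q' {Qq'} => [|? ?] /=; case: q {Qq} => [|? ?] //= _ _; by [].
- have [h0 [[t0 Qh] Hmin]] : exists h0, (exists t, Q (h0 :: t)) /\ forall h, (exists t, Q (h :: t)) -> (h0 <= h)%N.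
    apply: nat_min; have := HQ _ Qq; case: q Qq => // h t Qq _; by exists h, t.
  have [t1 [Qt1 Ht1]] := IH (fun t => Q (h0 :: t)) (fun t Ht => eq_add_S _ _ (HQ _ Ht)) (ex_intro _ t0 Qh).
  exists (h0 :: t1); split => // [[|h t]] Qht /=.
  + by have := HQ _ Qht.
  + move=> [Hlt|[Eh Hl]].
    * have := Hmin h (ex_intro _ t Qht); lia.
    * subst; exact: (Ht1 t Qht Hl).
Qed.

Fixpoint vadd (s t : list nat) : list nat :=
  match s, t with
  | a :: s', b :: t' => (a + b)%N :: vadd s' t'
  | _, _ => nil
  end.

Lemma vadd_length s t : length s = length t -> length (vadd s t) = length s.
Proof. elim: s t => [|a s IH] [|b t] //= [] /IH ->. by []. Qed.

Lemma vadd_lt a b c d : length a = length c -> length b = length d -> length a = length b ->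
  lexlt a b -> lexle c d -> lexlt (vadd a c) (vadd b d).
Proof.
elim: a b c d => [|x a IH] [|y b] [|z c] [|w d] //=.
move=> [L1] [L2] [L3] Hab [Hcd|Hcd].
- case: Hab => [Hxy|[Exy Hab]]; case: Hcd => [Hzw|[Ezw Hcd]].
  + left; lia.
  + left; lia.
  + left; lia.
  + subst; right; split => //; apply: IH => //; by left.
- case: Hcd => -> ->; case: Hab => [Hxy|[Exy Hab]].
  + left; lia.
  + subst; right; split => //; apply: IH => //; [lia|exact: lexle_refl].
Qed.

Lemma vaddC s t : vadd s t = vadd t s.
Proof. elim: s t => [|a s IH] [|b t] //=. by rewrite IH addnC. Qed.

Lemma vadd_le a b c d : length a = length c -> length b = length d -> length a = length b ->
  lexle a b -> lexle c d -> lexle (vadd a c) (vadd b d).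
Proof.
move=> L1 L2 L3 [H|->] H2.
- left; exact: vadd_lt.
- case: H2 => [H2|->]; last exact: lexle_refl.
  left; rewrite (vaddC b c) (vaddC b d); apply: vadd_lt => //; [lia|lia|exact: lexle_refl].
Qed.

Lemma lt_top c s B : length s = S c -> (List.hd 0 s < B)%N -> lexlt s (B :: List.repeat 0%N c).
Proof. case: s => //= a s _ H; by left. Qed.

Lemma choice_fun (A B : Type) (R : A -> B -> Prop) :
  (forall x, exists y, R x y) -> exists f : A -> B, forall x, R x (f x).
Proof.
move=> H; exists (fun x => proj1_sig (constructive_indefinite_description _ (H x))).
move=> x; exact: proj2_sig (constructive_indefinite_description _ (H x)).
Qed.

Section Abstract.
Variable T : Type.
Variable lt : T -> T -> Prop.

Definition WO := (forall x, ~ lt x x) /\ (forall x y z, lt x y -> lt y z -> lt x z) /\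
  (forall x y z, lt x y -> lt x z \/ lt z y).

Definition Good (X : T -> Prop) c := exists Phi : T -> list nat,
  (forall x, X x -> length (Phi x) = c) /\
  (forall x y, X x -> X y -> lt x y -> lexlt (Phi x) (Phi y)).

Definition BGood (X : T -> Prop) c := exists (Phi : T -> list nat) (B : nat),
  (forall x, X x -> length (Phi x) = S c /\ (List.hd 0 (Phi x) < B)%N) /\
  (forall x y, X x -> X y -> lt x y -> lexlt (Phi x) (Phi y)).

Lemma Good_BGood X c : Good X c -> BGood X c.
Proof.
move=> [Phi [H1 H2]]; exists (fun x => 0%N :: Phi x), 1%N; split.
- move=> x Hx /=; by rewrite H1.
- move=> x y Hx Hy Hl /=; right; split => //; exact: H2.
Qed.

Lemma BGood_sub X Y c : (forall x, Y x -> X x) -> BGood X c -> BGood Y c.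
Proof.
move=> S [Phi [B [H1 H2]]]; exists Phi, B; split => [x Hx|x y Hx Hy]; [exact: H1 (S _ Hx)|].
exact: H2 (S _ Hx) (S _ Hy).
Qed.

Lemma BGood_empty X c : (forall x, ~ X x) -> BGood X c.
Proof.
move=> H; exists (fun _ => List.repeat 0%N (S c)), 1%N; split => [x Hx|x y Hx]; exfalso; exact: H Hx.
Qed.

Hypothesis Hwo : WO.

Lemma fmin (A : T -> Prop) c (Phi : T -> list nat) (B : nat) :
  (forall x, A x -> length (Phi x) = S c /\ (List.hd 0 (Phi x) < B)%N) ->
  (forall x y, A x -> A y -> lt x y -> lexlt (Phi x) (Phi y)) ->
  exists f : T -> list nat,
    (forall x, length (f x) = S c /\ (List.hd 0 (f x) <= B)%N) /\
    (forall x y, lt x y -> lexle (f x) (f y)) /\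
    (forall x y, A x -> lt x y -> lexlt (f x) (f y)).
Proof.
move: Hwo => [Hirr [Htr Hneg]] HA HM.
pose top := B :: List.repeat 0%N c.
have Ltop : length top = S c by rewrite /= List.repeat_length.
pose Rr := (fun x v =>
  (exists a, A a /\ ~ lt a x /\ v = Phi a /\ forall a', A a' -> ~ lt a' x -> ~ lexlt (Phi a') v) \/
  ((forall a, A a -> lt a x) /\ v = top)).
have [f Hf] : exists f : T -> list nat, forall x, Rr x (f x).
  apply: (@choice_fun _ _ Rr) => x; rewrite /Rr; case: (classic (exists a, A a /\ ~ lt a x)) => [Hex|Hnex].
  - have [v [[a [Aa [Ha Hv]]] Hmin]] : exists m, (exists a, A a /\ ~ lt a x /\ m = Phi a) /\
        forall q, (exists a, A a /\ ~ lt a x /\ q = Phi a) -> ~ lexlt q m.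
      apply: (lex_min (c := S c)).
      + by move=> q [a [Aa [_ ->]]]; exact: (proj1 (HA a Aa)).
      + have [a [Aa Ha]] := Hex; exists (Phi a), a; by [].
    exists v; left; exists a; do 3 split => //.
    move=> a' Aa' Ha'; apply: Hmin; by exists a'.
  - exists top; right; split => // a Aa; apply: NNPP => H; apply: Hnex; by exists a.
have Hlen : forall x, length (f x) = S c /\ (List.hd 0 (f x) <= B)%N.
  move=> x; case: (Hf x) => [[a [Aa [_ [-> _]]]]|[_ ->]] //.
  have [L H] := HA a Aa; split => //; lia.
have Hle : forall x y, lt x y -> lexle (f x) (f y).
  move=> x y Hxy; case: (Hf y) => [[a [Aa [Hay [Ey _]]]]|[_ Ey]].
  - have Hax : ~ lt a x by move=> H; apply: Hay; exact: Htr H Hxy.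
    case: (Hf x) => [[b [Ab [Hbx [Ex Hmin]]]]|[Hall _]]; last by exfalso; exact: Hax (Hall a Aa).
    have Hn : ~ lexlt (f y) (f x) by rewrite Ey; exact: Hmin a Aa Hax.
    have Lxy : length (f x) = length (f y) by rewrite Ex Ey (proj1 (HA b Ab)) (proj1 (HA a Aa)).
    case: (lex_total Lxy) => [E|[L|L]]; [by right|by left|by exfalso].
  - case: (Hf x) => [[b [Ab [Hbx [Ex Hmin]]]]|[_ Ex]]; last by right; rewrite Ex Ey.
    left; rewrite Ex Ey; apply: lt_top; [exact: (proj1 (HA b Ab))|exact: (proj2 (HA b Ab))].
exists f; split; [exact: Hlen|split; [exact: Hle|]]; move=> x y Ax Hxy.
have [b [Ab [Hbx [Ex Hmin]]]] : exists b, A b /\ ~ lt b x /\ f x = Phi b /\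
    forall a', A a' -> ~ lt a' x -> ~ lexlt (Phi a') (f x).
  case: (Hf x) => [//|[Hall _]]; exfalso; exact: Hirr x (Hall x Ax).
have Hfx : lexle (f x) (Phi x).
  have Lxy : length (f x) = length (Phi x) by rewrite Ex (proj1 (HA b Ab)) (proj1 (HA x Ax)).
  case: (lex_total Lxy) => [E|[L|L]]; [by right|by left|exfalso]; exact: (Hmin x Ax (Hirr x)).
case: (Hf y) => [[a [Aa [Hay [Ey _]]]]|[_ Ey]].
- have Hxa : lt x a by case: (Hneg x y a Hxy) => // H; exfalso; exact: Hay H.
  have L := HM x a Ax Aa Hxa; rewrite Ey.
  case: Hfx => [L'|->] //; exact: lexlt_trans L' L.
- rewrite Ey; have L : lexlt (Phi x) top by apply: lt_top; [exact: (proj1 (HA x Ax))|exact: (proj2 (HA x Ax))].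
  case: Hfx => [L'|->] //; exact: lexlt_trans L' L.
Qed.

Lemma BGood_union A B c : BGood A c -> BGood B c -> BGood (fun x => A x \/ B x) c.
Proof.
move=> [PA [BA [HA1 HA2]]] [PB [BB [HB1 HB2]]].
have [fA [LA [MA SA]]] := fmin HA1 HA2.
have [fB [LB [MB SB]]] := fmin HB1 HB2.
exists (fun x => vadd (fA x) (fB x)), (BA + BB + 1)%N; split.
- move=> x _; have [l1 h1] := LA x; have [l2 h2] := LB x; split.
  + rewrite vadd_length; congruence.
  + move: l1 h1 l2 h2; case: (fA x) => [|a s] //= _ h1; case: (fB x) => [|b t] //= _ h2; lia.
- move=> x y Hx Hy Hxy.
  have [l1x _] := LA x; have [l1y _] := LA y; have [l2x _] := LB x; have [l2y _] := LB y.
  case: Hx => Hx.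
  + apply: vadd_lt; [congruence|congruence|congruence|exact: SA|exact: MB].
  + rewrite (vaddC (fA x)) (vaddC (fA y)); apply: vadd_lt; [congruence|congruence|congruence|exact: SB|exact: MA].
Qed.

Lemma Good_omega X c (lam : T -> nat) :
  (forall x y, X x -> X y -> lt x y -> (lam x <= lam y)%N) ->
  (forall n, BGood (fun x => X x /\ lam x = n) c) -> Good X (S c).
Proof.
move=> Hlam HB.
pose Rr := fun (n : nat) (p : (T -> list nat) * nat) =>
  (forall x, X x /\ lam x = n -> length (p.1 x) = S c /\ (List.hd 0 (p.1 x) < p.2)%N) /\
  (forall x y, X x /\ lam x = n -> X y /\ lam y = n -> lt x y -> lexlt (p.1 x) (p.1 y)).
have [F HF] : exists F, forall n, Rr n (F n).
  apply: (@choice_fun _ _ Rr) => n; have [Phi [B H]] := HB n; by exists (Phi, B).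
pose Sm := fix Sm n := match n with 0%N => 0%N | S n' => (Sm n' + (F n').2)%N end.
have Smono : forall n m, (n < m)%N -> (Sm n + (F n).2 <= Sm m)%N.
  move=> n; elim => [|m IH] Hnm; first by [].
  rewrite /=; have : (n < m)%N \/ n = m by lia.
  case => [Hlt|->]; last lia.
  have := IH Hlt; lia.
exists (fun x => match (F (lam x)).1 x with h :: t => (Sm (lam x) + h)%N :: t | nil => nil end).
split.
- move=> x Hx; have [[L _] _] := conj (proj1 (HF (lam x)) x (conj Hx erefl)) I.
  move: L; case: ((F (lam x)).1 x) => [|h t] //.
- move=> x y Hx Hy Hxy; have := Hlam x y Hx Hy Hxy; rewrite leq_eqVlt => /orP [/eqP E|Lt].
  + have Hxn : X x /\ lam x = lam x by [].
    have Hyn : X y /\ lam y = lam x by [].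
    have := proj2 (HF (lam x)) x y Hxn Hyn Hxy; rewrite -E.
    case: ((F (lam x)).1 x) => [|h1 t1] //; case: ((F (lam x)).1 y) => [|h2 t2] //=.
    move=> [H|[H1 H2]]; [left; lia|right; split => //; lia].
  + have [Lx Bx] := proj1 (HF (lam x)) x (conj Hx erefl).
    have [Ly By] := proj1 (HF (lam y)) y (conj Hy erefl).
    have := Smono _ _ Lt.
    move: Lx Bx Ly By; case: ((F (lam x)).1 x) => [|h1 t1] //; case: ((F (lam y)).1 y) => [|h2 t2] //= _ B1 _ B2 HS.
    left; lia.
Qed.

Lemma BGood_list (Y : Type) X c (g : T -> Y) (C : list Y) :
  (forall a, BGood (fun x => X x /\ g x = a) c) ->
  BGood (fun x => X x /\ List.In (g x) C) c.
Proof.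
move=> H; elim: C => [|a C IH].
- apply: BGood_empty => x [] _ [].
- apply: BGood_sub (BGood_union (H a) IH) => x [Xx [Ea|Hin]]; [left|right] => //.
Qed.
End Abstract.


Local Open Scope R_scope.



Fixpoint cands (Ls : list (list R)) : list (list R) :=
  match Ls with
  | nil => nil :: nil
  | L :: Ls' => List.flat_map (fun x => List.map (cons x) (cands Ls')) L
  end.

Lemma cands_in (D : list nat) (Lfun : nat -> list R) (al : list R) :
  (forall i, List.In i D -> List.In (List.nth i al 0) (Lfun i)) ->
  List.In (List.map (fun i => List.nth i al 0) D) (cands (List.map Lfun D)).
Proof.
elim: D => [|i D IH] H /=; first by left.
apply/List.in_flat_map; exists (List.nth i al 0); split; first by apply: H; left.
apply: List.in_map; apply: IH => j Hj; apply: H; by right.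
Qed.

Lemma up_mono x y : x <= y -> Z.le (up x) (up y).
Proof.
move=> Hxy; have [H1 H2] := archimed x; have [H3 H4] := archimed y.
apply Z.nlt_ge => Hlt.
have : Z.le (up y) (Z.sub (up x) 1) by lia.
move/IZR_le; rewrite minus_IZR => H; lra.
Qed.

Section Main.
Variable U : (R -> Prop) -> Prop.
Hypothesis UI : forall A B, U A -> U B -> U (fun x => A x /\ B x).
Hypothesis US : forall A B : R -> Prop, (forall x, A x -> B x) -> U A -> U B.
Hypothesis Uex : forall A, U A -> exists x, A x.
Hypothesis UC : forall A, U A \/ U (fun x => ~ A x).

Variable k : nat.
Variable P : nat -> R -> R.
Variable cl : nat -> nat.
Hypothesis HPpos : forall i, (i <= k)%N -> U (fun x => 0 < P i x).
Hypothesis Hcomp : forall i j, (i <= k)%N -> (j <= k)%N -> cl i = cl j ->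
  exists r, 0 < r /\ U (fun x => P j x <= r * P i x).
Variable Supp : list R -> Prop.
Hypothesis Hnn : forall al, Supp al -> forall i, (i <= k)%N -> 0 <= List.nth i al 0.
Variable Lf : R -> nat -> list R.
Hypothesis Hnat : forall al, Supp al -> forall a i, 0 < a -> (i <= k)%N ->
  List.nth i al 0 < a -> List.In (List.nth i al 0) (Lf a i).

Definition E (J : list nat) (al : list R) (x : R) : R :=
  List.fold_right (fun i acc => List.nth i al 0 * P i x + acc) 0 J.

Definition ult (f g : R -> R) := U (fun x => f x < g x).
Definition ule (f g : R -> R) := U (fun x => f x <= g x).
Definition ltJ J (a b : list R) := ult (E J a) (E J b).

Lemma U_not_false : ~ U (fun _ => False).
Proof. by move=> /Uex [x]. Qed.

Lemma U_forall_list (J : list nat) (Q : nat -> R -> Prop) :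
  (forall i, List.In i J -> U (Q i)) -> U (fun x => forall i, List.In i J -> Q i x).
Proof.
elim: J => [|j J IH] H.
- case: (UC (fun _ => False)) => H0; first by exfalso; exact: U_not_false.
  apply: US H0 => x _ i [].
- have H1 := H j (or_introl erefl).
  have H2 := IH (fun i Hi => H i (or_intror Hi)).
  apply: US (UI H1 H2) => x [A B] i [<-|Hi] //; exact: B.
Qed.

Lemma ult_WO (h : list R -> R -> R) : WO (fun a b => ult (h a) (h b)).
Proof.
split; [|split].
- move=> a /Uex [x]; lra.
- move=> a b c H1 H2; apply: US (UI H1 H2) => x [] ; lra.
- move=> a b c H; case: (UC (fun x => h a x < h c x)) => H'; [by left|right].
  apply: US (UI H H') => x [] ; lra.
Qed.

Lemma ule_not f g : ~ ule f g -> ult g f.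
Proof.
move=> H; case: (UC (fun x => f x <= g x)) => // H'.
apply: US H' => x; lra.
Qed.

Lemma E_cons j J al x : E (j :: J) al x = List.nth j al 0 * P j x + E J al x.
Proof. by []. Qed.

Lemma E_split (f : nat -> bool) J al x :
  E J al x = E (List.filter f J) al x + E (List.filter (fun i => negb (f i)) J) al x.
Proof.
elim: J => [|j J IH] /=; first lra.
case: (f j) => /=; rewrite IH; lra.
Qed.

Lemma E_nonneg J al x : (forall i, List.In i J -> 0 <= List.nth i al 0 /\ 0 <= P i x) ->
  0 <= E J al x.
Proof.
elim: J => [|j J IH] H /=; first lra.
have [A B] := H j (or_introl erefl).
have := IH (fun i Hi => H i (or_intror Hi)).
have := Rmult_le_pos _ _ A B; lra.
Qed.

Lemma E_ge_term J al x i : (forall i, List.In i J -> 0 <= List.nth i al 0 /\ 0 <= P i x) ->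
  List.In i J -> List.nth i al 0 * P i x <= E J al x.
Proof.
elim: J => [|j J IH] H //= [<-|Hi].
- have := E_nonneg (fun i Hi => H i (or_intror Hi)) (al := al); lra.
- have [A B] := H j (or_introl erefl).
  have := IH (fun i Hi => H i (or_intror Hi)) Hi.
  have := Rmult_le_pos _ _ A B; lra.
Qed.

Definition sumc (J : list nat) (al : list R) : R :=
  List.fold_right (fun i acc => List.nth i al 0 + acc) 0 J.

Lemma E_le_sum J al x d : (forall i, List.In i J -> 0 <= List.nth i al 0 /\ P i x <= P d x) ->
  E J al x <= sumc J al * P d x.
Proof.
elim: J => [|j J IH] H /=; first lra.
have [A B] := H j (or_introl erefl).
have := IH (fun i Hi => H i (or_intror Hi)).
have := Rmult_le_compat_l _ _ _ A B; lra.
Qed.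

Lemma E_fiber D a b x :
  List.map (fun i => List.nth i a 0) D = List.map (fun i => List.nth i b 0) D ->
  E D a x = E D b x.
Proof.
elim: D => [|j D IH] //= [E1 E2]; by rewrite E1 IH.
Qed.


Lemma U_true (A : R -> Prop) : (forall x, A x) -> U A.
Proof.
move=> H; case: (UC (fun _ => False)) => H0; first by exfalso; exact: U_not_false.
by apply: US H0 => x _.
Qed.

Lemma small_sum J' b d :
  (forall i, List.In i J' -> forall eps, 0 < eps -> ule (P i) (fun x => eps * P d x)) ->
  (forall i, List.In i J' -> 0 <= List.nth i b 0) ->
  U (fun x => 0 <= P d x) ->
  forall eta, 0 < eta -> ule (E J' b) (fun x => eta * P d x).
Proof.
move=> Hs Hb Hd; elim: J' Hs Hb => [|j J IH] Hs Hb eta Heta.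
- apply: US Hd => x Hx /=; have := Rmult_le_pos _ _ (Rlt_le _ _ Heta) Hx; lra.
- have IH' := IH (fun i Hi => Hs i (or_intror Hi)) (fun i Hi => Hb i (or_intror Hi)) (eta / 2) ltac:(lra).
  have Hbj := Hb j (or_introl erefl).
  case: (Req_dec (List.nth j b 0) 0) => Hz.
  + apply: US (UI IH' Hd) => x [H1 H2]; rewrite E_cons Hz.
    have := Rmult_le_pos _ _ (Rlt_le 0 (eta/2) ltac:(lra)) H2; lra.
  + have Hpos : 0 < List.nth j b 0 by lra.
    have Hj := Hs j (or_introl erefl) (eta / (2 * List.nth j b 0)) ltac:(apply: Rdiv_lt_0_compat; lra).
    apply: US (UI IH' Hj) => x [H1 H2]; rewrite E_cons.
    have := Rmult_le_compat_l _ _ _ (Rlt_le _ _ Hpos) H2.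
    have -> : List.nth j b 0 * (eta / (2 * List.nth j b 0) * P d x) = eta / 2 * P d x by field; lra.
    lra.
Qed.

Lemma exists_dom J : J <> nil -> exists d, List.In d J /\ forall i, List.In i J -> ule (P i) (P d).
Proof.
elim: J => [|j J IH] // _; case: J IH => [|j' J] IH.
- exists j; split; first by left.
  move=> i [<-|[]]; apply: U_true => x; lra.
- have [d [Hd Hdom]] := IH ltac:(discriminate).
  case: (UC (fun x => P d x <= P j x)) => H.
  + exists j; split; first by left.
    move=> i [<-|Hi]; first by apply: U_true => x; lra.
    apply: US (UI (Hdom i Hi) H) => x []; lra.
  + exists d; split; first by right.
    move=> i [<-|Hi]; last exact: Hdom.
    apply: US H => x; lra.
Qed.

Lemma Main c : forall J, (forall i, List.In i J -> (i <= k)%N) ->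
  (exists Lc : list nat, (length Lc <= c)%N /\ forall i, List.In i J -> List.In (cl i) Lc) ->
  forall X, (forall al, X al -> Supp al) -> Good (ltJ J) X c.
Proof.
elim: c => [|c IH] J HJ [Lc [HLc HcJ]] X HX.
- case: J HJ HcJ => [|j J] HJ HcJ.
  + exists (fun _ => nil); split => // a b _ _ /Uex [x]; rewrite /E /=; lra.
  + exfalso; have := HcJ j (or_introl erefl); case: Lc HLc {HcJ} => //.
have [->|HJne] : J = nil \/ J <> nil by case: (J) => [|? ?]; [left|right].
  exists (fun _ => List.repeat 0%N c.+1); split => [a _|a b _ _ /Uex [x]]; first exact: List.repeat_length.
  rewrite /E /=; lra.
have [d [Hd Hdom]] := exists_dom HJne.
have Hdk : (d <= k)%N := HJ d Hd.
pose inD := fun i => if excluded_middle_informative (exists K, 0 < K /\ ule (P d) (fun x => K * P i x)) then true else false.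
have HinD : forall i, inD i = true <-> exists K, 0 < K /\ ule (P d) (fun x => K * P i x).
  move=> i; rewrite /inD; case: excluded_middle_informative => H; split => // H'; exfalso; exact: H H'.
pose D := List.filter inD J.
pose J' := List.filter (fun i => negb (inD i)) J.
have HDJ : forall i, List.In i D -> List.In i J /\ inD i = true.
  by move=> i /List.filter_In.
have HJ'J : forall i, List.In i J' -> List.In i J /\ inD i = false.
  move=> i /List.filter_In [A B]; split => //; by case: (inD i) B.
have [cf Hcf] : exists cf : nat -> R, forall i, inD i = true -> 0 < cf i /\ ule (fun x => cf i * P d x) (P i).
  apply: (@choice_fun _ _ (fun i c => inD i = true -> 0 < c /\ ule (fun x => c * P d x) (P i))) => i.
  case E: (inD i); last by exists 1.
  have [K [HK HU]] := (proj1 (HinD i)) E.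
  exists (/ K) => _; split; first exact: Rinv_0_lt_compat.
  apply: US HU => x Hx.
  have := Rmult_le_compat_l (/ K) _ _ (Rlt_le _ _ (Rinv_0_lt_compat _ HK)) Hx.
  rewrite -Rmult_assoc Rinv_l; lra.
have Hsmall : forall i, List.In i J' -> forall eps, 0 < eps -> ule (P i) (fun x => eps * P d x).
  move=> i Hi eps He; have [_ Hf] := HJ'J i Hi.
  have Hn : ~ ule (P d) (fun x => / eps * P i x).
    move=> H; have : inD i = true by apply/HinD; exists (/ eps); split => //; exact: Rinv_0_lt_compat.
    by rewrite Hf.
  apply: US (ule_not Hn) => x Hx.
  have := Rmult_lt_compat_l eps _ _ He Hx; rewrite -Rmult_assoc Rinv_r; lra.
have Gset : U (fun x => forall i, List.In i J -> 0 < P i x /\ P i x <= P d x /\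
    (inD i = true -> cf i * P d x <= P i x)).
  apply: U_forall_list => i Hi.
  have H1 := HPpos (HJ i Hi); have H2 := Hdom i Hi.
  case E: (inD i).
  - have [_ H3] := Hcf i E.
    by apply: US (UI H1 (UI H2 H3)) => x [A [B C]].
  - by apply: US (UI H1 H2) => x [A B].
have Hnna : forall al, Supp al -> forall i, List.In i J -> 0 <= List.nth i al 0.
  move=> al H i Hi; exact: (Hnn H (HJ i Hi)).
pose Sa := fun al t => ule (fun x => t * P d x) (E D al).
have Sa0 : forall al, Supp al -> Sa al 0.
  move=> al Hal; apply: US Gset => x Hx; rewrite Rmult_0_l; apply: E_nonneg => i HiD.
  have [HiJ _] := HDJ i HiD; split; [exact: Hnna|]; have := proj1 (Hx i HiJ); lra.
have Hex_lub : forall al, Supp al -> exists s, is_lub (Sa al) s.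
  move=> al Hal.
  have Hb : bound (Sa al).
    exists (sumc D al) => t Ht; apply: Rnot_lt_le => Hgt.
    have [x [Hx1 Hx2]] := Uex (UI Ht Gset).
    have Hdx := proj1 (Hx2 d Hd).
    have := @E_le_sum D al x d (fun i HiD => let H := HDJ i HiD in
       conj (Hnna al Hal i (proj1 H)) (proj1 (proj2 (Hx2 i (proj1 H))))).
    nra.
  have [m Hm] := completeness _ Hb (ex_intro _ 0 (Sa0 al Hal)); by exists m.
pose st := fun al => epsilon (inhabits 0) (fun s => is_lub (Sa al) s).
have Hst : forall al, Supp al -> is_lub (Sa al) (st al).
  move=> al H; exact: epsilon_spec (Hex_lub al H).
have st_nn : forall al, Supp al -> 0 <= st al.
  move=> al H; exact: (proj1 (Hst al H)) 0 (Sa0 al H).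
pose lam := fun al => Z.to_nat (up (st al)).
have st_lt : forall al, Supp al -> st al < INR (lam al).
  move=> al H; have [A _] := archimed (st al); have B := st_nn al H.
  have Hup : Z.le 0 (up (st al)) by apply: le_IZR; lra.
  rewrite /lam INR_IZR_INZ Z2Nat.id //; lra.
have Hsa_term : forall al i, Supp al -> List.In i D -> List.nth i al 0 * cf i <= st al.
  move=> al i Hal HiD; have [HiJ Hi] := HDJ i HiD; apply: (proj1 (Hst al Hal)).
  apply: US Gset => x Hx.
  have [A [B C]] := Hx i HiJ; have Ci := C Hi.
  have Hali := Hnna al Hal i HiJ.
  have := @E_ge_term D al x i (fun j HjD => let H := HDJ j HjD in
       conj (Hnna al Hal j (proj1 H)) (Rlt_le _ _ (proj1 (Hx j (proj1 H))))) HiD.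
  have := Rmult_le_compat_l _ _ _ Hali Ci.
  rewrite Rmult_assoc; lra.
have Hmono : forall a b, X a -> X b -> ltJ J a b -> (lam a <= lam b)%N.
  move=> a b Xa Xb Hab; have Sa' := HX a Xa; have Sb := HX b Xb.
  suff Hle : st a <= st b by have := up_mono Hle; rewrite /lam; lia.
  apply: Rnot_lt_le => Hgt.
  have [uba luba] := Hst a Sa'; have [ubb lubb] := Hst b Sb.
  pose t1 := st b + (st a - st b) / 3.
  pose t2 := st b + 2 * (st a - st b) / 3.
  have Ht2 : Sa a t2.
    have [t [Ht Htt]] : exists t, Sa a t /\ t2 < t.
      apply: NNPP => H.
      have : is_upper_bound (Sa a) t2.
        move=> t Ht; apply: Rnot_lt_le => Hc; apply: H; by exists t.
      move/luba; rewrite /t2; lra.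
    apply: US (UI Ht (HPpos Hdk)) => x [A B].
    have := Rmult_le_compat_r _ _ _ (Rlt_le _ _ B) (Rlt_le _ _ Htt); lra.
  have Ht1 : ult (E D b) (fun x => t1 * P d x).
    apply: ule_not => H; have := ubb t1 H; rewrite /t1; lra.
  have Hs := @small_sum J' b d Hsmall (fun i Hi => Hnna b Sb i (proj1 (HJ'J i Hi)))
    (US (fun x => Rlt_le _ _) (HPpos Hdk)) ((st a - st b) / 3) ltac:(lra).
  have [x [[[[H1 H2] H3] H4] H5]] := Uex (UI (UI (UI (UI Hab Ht2) Ht1) Hs) Gset).
  have Ha' : 0 <= E J' a x.
    apply: E_nonneg => i Hi; have [HiJ _] := HJ'J i Hi; split; [exact: Hnna|].
    have := proj1 (H5 i HiJ); lra.
  have H1' : E D a x + E J' a x < E D b x + E J' b x by rewrite /D /J' -!E_split.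
  have e : t2 * P d x = t1 * P d x + (st a - st b) / 3 * P d x.
    unfold t1, t2; clearbody st; field.
  lra.
have Hlevel : forall n, BGood (ltJ J) (fun al => X al /\ lam al = n) c.
  move=> n.
  pose Cn := cands (List.map (fun i => Lf (INR n / cf i + 1) i) D).
  pose g := fun al : list R => List.map (fun i => List.nth i al 0) D.
  apply: (@BGood_sub _ _ (fun al => (X al /\ lam al = n) /\ List.In (g al) Cn)).
  + move=> al [Xal Hl]; split => //; apply: cands_in => i HiD.
    have [HiJ Hi] := HDJ i HiD; have Hal := HX al Xal.
    have Hcfi := proj1 (Hcf i Hi).
    have Hn0 := pos_INR n.
    apply: Hnat => //; [|exact: HJ|].
    * have : 0 <= INR n / cf i by apply: Rmult_le_pos => //; apply: Rlt_le; apply: Rinv_0_lt_compat.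
      lra.
    * have H1 := Hsa_term al i Hal HiD; have H2 := st_lt al Hal; rewrite Hl in H2.
      have : List.nth i al 0 < INR n / cf i.
        rewrite /Rdiv; apply: (Rmult_lt_reg_r (cf i)) => //.
        rewrite Rmult_assoc Rinv_l; lra.
      have : 0 <= INR n / cf i by apply: Rmult_le_pos => //; apply: Rlt_le; apply: Rinv_0_lt_compat.
      lra.
  + apply: (BGood_list (ult_WO (E J))) => a; apply: Good_BGood.
    have HJ'k : forall i, List.In i J' -> (i <= k)%N by move=> i /HJ'J [/HJ].
    have HLc' : exists Lc' : list nat, (length Lc' <= c)%N /\ forall i, List.In i J' -> List.In (cl i) Lc'.
      exists (List.remove Nat.eq_dec (cl d) Lc); split.
      * have := List.remove_length_lt Nat.eq_dec Lc (cl d) (HcJ d Hd); lia.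
      * move=> i Hi; have [HiJ Hf] := HJ'J i Hi.
        apply: List.in_in_remove; last exact: HcJ.
        move=> Heq; have [r [Hr HU]] := Hcomp (HJ i HiJ) Hdk Heq.
        have : inD i = true by apply/HinD; exists r.
        by rewrite Hf.
    have [Phi [HP1 HP2]] := IH J' HJ'k HLc' (fun al => (X al /\ lam al = n) /\ g al = a)
      (fun al H => HX al (proj1 (proj1 H))).
    exists Phi; split => // al be Hal Hbe Hlt; apply: HP2 => //.
    have Hg : g al = g be by rewrite (proj2 Hal) (proj2 Hbe).
    apply: US Hlt => x Hx.
    have := E_fiber x Hg.
    move: Hx; rewrite (E_split inD J al x) (E_split inD J be x) -/D -/J' => Hx Heq; lra.
exact: (Good_omega Hmono Hlevel).
Qed.

End Main.




Definition Fs (m : nat -> R -> R) (j : nat) (al : list R) (x : R) (J : list nat) : R :=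
  List.fold_right (fun t acc => List.nth t al 0 * ln (m (j + t)%N x) + acc) 0 J.

Lemma Fs_shift m j a al x s n :
  Fs m j (a :: al) x (List.seq (S s) n) = Fs m (S j) al x (List.seq s n).
Proof.
elim: n s => [|n IH] s //=.
rewrite /Fs /= -/(Fs m j (a :: al) x _) -/(Fs m (S j) al x _) IH.
by rewrite addnS addSn.
Qed.

Lemma mpow_exp m al : forall j x, mpow m j al x = exp (Fs m j al x (List.seq 0 (length al))).
Proof.
elim: al => [|a al IH] j x /=; first by rewrite /Fs /= exp_0.
rewrite IH /Fs /= -/(Fs m j (a :: al) x _) Fs_shift exp_plus addn0 /Rpower; by [].
Qed.

Lemma Fs_E m al x J : Fs m 0 al x J = - E (fun i x => - ln (m i x)) J al x.
Proof.
elim: J => [|t J IH]; first by rewrite /Fs /E /=; lra.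
have -> : Fs m 0 al x (t :: J) = List.nth t al 0 * ln (m t x) + Fs m 0 al x J by rewrite /Fs /= add0n.
rewrite IH E_cons; ring.
Qed.

Lemma evt_and (A B : R -> Prop) : evt A -> evt B -> evt (fun x => A x /\ B x).
Proof.
move=> [a Ha] [b Hb]; exists (Rmax a b) => x Hx; split.
- apply: Ha; apply: Rle_lt_trans Hx; exact: Rmax_l.
- apply: Hb; apply: Rle_lt_trans Hx; exact: Rmax_r.
Qed.

Lemma evt_mono (A B : R -> Prop) : (forall x, A x -> B x) -> evt A -> evt B.
Proof. move=> H [a Ha]; exists a => x Hx; exact/H/Ha. Qed.

Theorem lemma5p5 (K : comNzRingType) (M : (R -> R) -> Prop) (k : nat)
    (m : nat -> R -> R) (G : list R -> K) (l : nat) :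
  char0 K ->
  mult_vsubspace M ->
  gen_monomials M k m ->
  gen_power_series k G ->
  natural_support k G ->
  num_comp_classes k m (S l) ->
  exists phi : (R -> R) -> list nat,
    (forall n, in_supp M m G n -> List.length (phi n) = S l) /\
    (forall n n', in_supp M m G n -> in_supp M m G n' ->
       evt (fun x => Rlt (n' x) (n x)) -> lexlt (phi n) (phi n')).
Proof.
move=> _ [HMpos _] [Hm1 _] [W [HW1 HW2]] Hns [cl [Hcl1 [_ Hcl3]]].
have [U [UI [US [Uex [UC Uevt]]]]] := @ultra_exists R evt
  (ex_intro _ 0 (fun _ _ => I)) evt_and evt_mono
  (fun A '(ex_intro a Ha) => ex_intro _ (a + 1) (Ha (a + 1) ltac:(lra))).
pose P := fun i x => - ln (m i x).
have Hmpos : forall i, (i <= k)%N -> evt (fun x => 0 < m i x /\ m i x < 1).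
  move=> i Hi; have [HM Hs] := Hm1 i Hi.
  apply: evt_mono (evt_and (proj2 (HMpos _ HM)) (Hs 1 ltac:(lra))) => x [A B].
  split => //; move: B; rewrite Rabs_pos_eq; lra.
have HPpos : forall i, (i <= k)%N -> U (fun x => 0 < P i x).
  move=> i Hi; apply: Uevt; apply: evt_mono (Hmpos i Hi) => x [A B].
  have := ln_increasing _ _ A B; rewrite ln_1 /P; lra.
have Hcomp : forall i j, (i <= k)%N -> (j <= k)%N -> cl i = cl j ->
    exists r, 0 < r /\ U (fun x => P j x <= r * P i x).
  move=> i j Hi Hj Hij; have [r [s [Hr [Hs Hev]]]] := proj2 (Hcl3 i j Hi Hj) Hij.
  exists r; split => //; apply: Uevt.
  apply: evt_mono (evt_and Hev (evt_and (Hmpos i Hi) (Hmpos j Hj))) => x [[A _] [[Bi _] [Bj _]]].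
  move: A; rewrite !Rabs_pos_eq; try lra.
  rewrite /Rpower => A.
  have := ln_increasing _ _ (exp_pos _) A; rewrite ln_exp /P; lra.
pose Supp := fun al : list R => G al <> 0%R.
have Hnn : forall al, Supp al -> forall i, (i <= k)%N -> 0 <= List.nth i al 0.
  move=> al Hal i Hi; exact: (proj2 (HW1 i Hi)) _ ((proj2 (HW2 al Hal)) i Hi).
pose Lf := fun a i => epsilon (inhabits nil) (fun L : list R => forall al, G al <> 0%R ->
   List.nth i al 0 < a -> List.In (List.nth i al 0) L).
have Hnat : forall al, Supp al -> forall a i, 0 < a -> (i <= k)%N ->
    List.nth i al 0 < a -> List.In (List.nth i al 0) (Lf a i).
  move=> al Hal a i Ha Hi Hlt.
  have := epsilon_spec (inhabits nil) (fun L : list R => forall al, G al <> 0%R ->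
   List.nth i al 0 < a -> List.In (List.nth i al 0) L) (Hns a Ha i Hi).
  by move=> /(_ al Hal Hlt).
have HJk : forall i, List.In i (List.seq 0 (S k)) -> (i <= k)%N.
  move=> i /List.in_seq; lia.
have HLc : exists Lc : list nat, (length Lc <= S l)%N /\
    forall i, List.In i (List.seq 0 (S k)) -> List.In (cl i) Lc.
  exists (List.seq 0 (S l)); split; first by rewrite List.length_seq.
  move=> i /List.in_seq Hi; apply/List.in_seq; have := Hcl1 i ltac:(lia); lia.
have [Phi [HP1 HP2]] := Main UI US Uex UC HPpos Hcomp Hnn Hnat HJk HLc (X := Supp) (fun al H => H).
pose sel := fun n : R -> R => epsilon (inhabits nil)
  (fun al => G al <> 0%R /\ evt (fun x => mpow m 0 al x = n x)).
have Hsel : forall n, in_supp M m G n -> G (sel n) <> 0%R /\ evt (fun x => mpow m 0 (sel n) x = n x).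
  move=> n [_ [s [_ [Hs Hks]]]].
  apply: (epsilon_spec (inhabits nil) (fun al => G al <> 0%R /\ evt (fun x => mpow m 0 al x = n x))).
  case: s Hs Hks => [|al s] Hs Hks; first by exfalso; apply: Hks.
  by exists al; apply/Hs; left.
exists (fun n => Phi (sel n)); split.
- move=> n Hn; exact: HP1 (proj1 (Hsel n Hn)).
- move=> n n' Hn Hn' Hlt.
  have [G1 E1] := Hsel n Hn; have [G2 E2] := Hsel n' Hn'.
  apply: HP2 => //; rewrite /ltJ /ult; apply: Uevt.
  have L1 := proj1 (HW2 _ G1); have L2 := proj1 (HW2 _ G2).
  apply: evt_mono (evt_and Hlt (evt_and E1 E2)) => x [H [A B]].
  move: H; rewrite -A -B !mpow_exp L1 L2 !Fs_E => /exp_lt_inv; rewrite /P; lra.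
Qed.
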